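(* For every integer $n\ge 0$, $$l_{3n}(1,2,-1,q)\,[3n+1]=(-1)^n q^{\frac{n(3n-1)}{2}}[n+1],$$ $$l_{3n+1}(1,2,-1,q)\,[3n+2]=(-1)^n q^{\frac{n(3n+1)}{2}}[n+1]\,(1+q^{n+1}),$$ $$l_{3n+2}(1,2,-1,q)\,[3n+3]=(-1)^n q^{\frac{3n^2+5n+4}{2}}[n+1].$$
   Context: $q$ is an indeterminate; $[n]=\frac{1-q^n}{1-q}$, $[n]!=[1]\cdots[n]$, $[0]!=1$. For an integer $m\ge0$, $$l_n(x,m,s,q)=\sum_{k=0}^{\lfloor n/2\rfloor}s^k q^{\binom k2}\frac{[n]!}{[k]!\,[n-2k]!}\,\frac{[m+n-k-1]!}{[m+n-1]!}\,x^{n-2k}\quad (n\ge1),\qquad l_0(x,m,s,q)=1.$$ *)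

(* Defs.v *)
(* The indeterminate q is modelled as the element 'X of the
   field of rational functions {fraction {poly rat}}. *)
From HB Require Import structures.
From mathcomp Require Import all_boot all_order all_algebra fraction.
Set Implicit Arguments. Unset Strict Implicit. Unset Printing Implicit Defensive.
Import Order.TTheory GRing.Theory Num.Theory.
Local Open Scope ring_scope.


Definition RF := {fraction {poly rat}}.
Definition qX : RF := @FracField.tofrac _ 'X.

Definition qint (F : fieldType) (q : F) (n : nat) : F := (1 - q ^+ n) / (1 - q).
Definition qfact (F : fieldType) (q : F) (n : nat) : F :=
  \prod_(i < n) qint q i.+1.

Definition lpoly (F : fieldType) (n : nat) (x : F) (m : nat) (s q : F) : F :=
  if n == 0%N then 1 else
  \sum_(k < n./2.+1)
     s ^+ k * q ^+ 'C(k, 2) * (qfact q n / (qfact q k * qfact q (n - 2 * k)))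
     * (qfact q (m + n - k - 1) / qfact q (m + n - 1)) * x ^+ (n - 2 * k).

(* Main.v *)
Require Import Defs.
From HB Require Import structures.
From mathcomp Require Import all_boot all_order all_algebra fraction.
From mathcomp Require Import ring zify.
Set Implicit Arguments. Unset Strict Implicit. Unset Printing Implicit Defensive.
Import Order.TTheory GRing.Theory Num.Theory.
Local Open Scope ring_scope.

Lemma qint_add (F : fieldType) (q : F) a b :
  qint q (a + b) = qint q a + q ^+ a * qint q b.
Proof. rewrite /qint exprD; ring. Qed.

Lemma qint_mul (F : fieldType) (q : F) n : q != 1 ->
  (1 - q) * qint q n = 1 - q ^+ n.
Proof.
move=> hq; rewrite /qint mulrC divfK //; by rewrite subr_eq0 eq_sym.
Qed.

Lemma qint1 (F : fieldType) (q : F) : q != 1 -> qint q 1 = 1.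
Proof. move=> hq; rewrite /qint expr1 divff //; by rewrite subr_eq0 eq_sym. Qed.

Lemma qint_neq0 (F : fieldType) (q : F) i :
  (forall j, (0 < j)%N -> q ^+ j != 1) -> (0 < i)%N -> qint q i != 0.
Proof.
move=> hq hi; rewrite /qint mulf_neq0 //.
  by rewrite subr_eq0 eq_sym hq.
by rewrite invr_eq0 subr_eq0 eq_sym -(expr1 q) hq.
Qed.

Lemma qfactS (F : fieldType) (q : F) n : qfact q n.+1 = qfact q n * qint q n.+1.
Proof. by rewrite /qfact big_ord_recr. Qed.

Lemma qfact0 (F : fieldType) (q : F) : qfact q 0 = 1.
Proof. by rewrite /qfact big_ord0. Qed.

Lemma qfact_neq0 (F : fieldType) (q : F) n :
  (forall j, (0 < j)%N -> q ^+ j != 1) -> qfact q n != 0.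
Proof.
move=> hq; elim: n => [|n IH]; first by rewrite qfact0 oner_neq0.
by rewrite qfactS mulf_neq0 // qint_neq0.
Qed.

Fixpoint qbin (F : fieldType) (q : F) (m k : nat) {struct m} : F :=
  match m, k with
  | 0, 0 => 1
  | 0, _ => 0
  | m'.+1, 0 => 1
  | m'.+1, k'.+1 => q ^+ (m' - k') * qbin q m' k' + qbin q m' k'.+1
  end.

Lemma qbin_gt (F : fieldType) (q : F) m k : (m < k)%N -> qbin q m k = 0.
Proof.
elim: m k => [|m IH] [|k] //= hk.
by rewrite !IH ?mulr0 ?addr0 //; lia.
Qed.

Lemma qbin0 (F : fieldType) (q : F) m : qbin q m 0 = 1.
Proof. by case: m. Qed.

Lemma qbin_fact (F : fieldType) (q : F) m k : (k <= m)%N ->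
  qbin q m k * (qfact q k * qfact q (m - k)) = qfact q m.
Proof.
elim: m k => [|m IH] [|k] //= hk.
- by rewrite qfact0 !mulr1.
- by rewrite qfact0 ?mul1r subn0 ?qbin0 ?mul1r.
- rewrite subSS; case: (ltngtP k m) => hkm; last first.
  + subst k; rewrite subnn (@qbin_gt _ q m m.+1 (ltnSn m)) addr0 expr0 mul1r qfact0 mulr1 qfactS mulrA.
    have := IH m (leqnn m); rewrite subnn qfact0 mulr1 => ->; done.
  + lia.
  have e : (m - k = (m - k.+1).+1)%N by lia.
  have IH1 := IH k (ltnW hkm); have IH2 := IH k.+1 hkm.
  rewrite e in IH1 *; set d := (m - k.+1)%N in IH1 IH2 *.
  have em : (m.+1 = d.+1 + k.+1)%N by rewrite /d; lia.
  rewrite [in RHS]qfactS em qint_add.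
  rewrite !qfactS in IH1 IH2 *.
  transitivity (q ^+ d.+1 * qint q k.+1 * (qbin q m k * (qfact q k * (qfact q d * qint q d.+1)))
     + qint q d.+1 * (qbin q m k.+1 * (qfact q k * qint q k.+1 * qfact q d))); first by ring.
  rewrite IH1 IH2; ring.
Qed.
Lemma qbin_pascal2 (F : fieldType) (q : F) m k :
  (forall j, (0 < j)%N -> q ^+ j != 1) ->
  qbin q m.+1 k.+1 = q ^+ k.+1 * qbin q m k.+1 + qbin q m k.
Proof.
move=> hq; case: (ltngtP k m) => hkm.
- have X0 : qfact q k.+1 * qfact q (m - k) != 0 by rewrite mulf_neq0 // qfact_neq0.
  apply: (mulIf X0).
  have := qbin_fact q (ltnW hkm : (k.+1 <= m.+1)%N) ; rewrite subSS => ->.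
  have e : (m - k = (m - k.+1).+1)%N by lia.
  have IH1 := qbin_fact q (ltnW hkm); have IH2 := qbin_fact q hkm.
  rewrite e in IH1 *; set d := (m - k.+1)%N in IH1 IH2 *.
  have em : (m.+1 = k.+1 + d.+1)%N by rewrite /d; lia.
  rewrite qfactS em qint_add.
  rewrite !qfactS in IH1 IH2 *.
  symmetry.
  transitivity (q ^+ k.+1 * qint q d.+1 * (qbin q m k.+1 * (qfact q k * qint q k.+1 * qfact q d))
     + qint q k.+1 * (qbin q m k * (qfact q k * (qfact q d * qint q d.+1)))); first by ring.
  rewrite IH1 IH2; ring.
- rewrite /= !qbin_gt //; try lia; ring.
- subst k; rewrite /= subnn (@qbin_gt _ q m m.+1 (ltnSn m)); ring.
Qed.
Definition fF (F : fieldType) (q : F) (n k : nat) : F :=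
  (-1) ^+ k * q ^+ 'C(k, 2) * qbin q (n - k) k.
Definition gK (F : fieldType) (q : F) (n k : nat) : F :=
  (-1) ^+ k * q ^+ 'C(k, 2) * q ^+ (n - k) * qbin q (n - k) k.
Definition Fs (F : fieldType) (q : F) (n : nat) : F := \sum_(k < n.+1) fF q n k.
Definition Ks (F : fieldType) (q : F) (n : nat) : F := \sum_(k < n.+1) gK q n k.

Lemma sum_recl (F : fieldType) (f : nat -> F) n :
  \sum_(k < n.+1) f k = f 0%N + \sum_(k < n) f k.+1.
Proof. rewrite big_ord_recl; congr (_ + _); apply: eq_bigr => i _; by rewrite lift0. Qed.

Lemma sum_recr (F : fieldType) (f : nat -> F) n :
  \sum_(k < n.+1) f k = \sum_(k < n) f k + f n.
Proof. by rewrite big_ord_recr. Qed.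

Lemma fF0 (F : fieldType) (q : F) n : fF q n 0 = 1.
Proof. by rewrite /fF subn0 qbin0 expr0 bin0n expr0 !mul1r. Qed.

Lemma gK0 (F : fieldType) (q : F) n : gK q n 0 = q ^+ n.
Proof. by rewrite /gK subn0 qbin0 expr0 bin0n expr0 !mul1r mulr1. Qed.

Lemma fFnn (F : fieldType) (q : F) n : fF q n.+1 n.+1 = 0.
Proof. by rewrite /fF subnn qbin_gt // mulr0. Qed.

Lemma gKnn (F : fieldType) (q : F) n : gK q n.+1 n.+1 = 0.
Proof. by rewrite /gK subnn qbin_gt // mulr0. Qed.

Lemma Fs_rec (F : fieldType) (q : F) n : Fs q n.+2 = Fs q n.+1 - Ks q n.
Proof.
rewrite /Fs /Ks sum_recl (sum_recr (fun k => fF q n.+2 k.+1)) fFnn addr0.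
rewrite [X in _ = X - _]sum_recl !fF0 -addrA; congr (_ + _).
rewrite -sumrB; apply: eq_bigr => [[k /= hk]] _.
rewrite /fF /gK.
have -> : (n.+2 - k.+1 = (n - k).+1)%N by lia.
rewrite subSS /= binS bin1 exprD !exprS.
case: (leqP k (n - k)) => hk2.
  have -> : q ^+ (n - k) = q ^+ (n - k - k) * q ^+ k by rewrite -exprD subnK.
  ring.
rewrite (@qbin_gt _ q (n - k) k hk2); ring.
Qed.

Lemma Ks_rec (F : fieldType) (q : F) n :
  (forall j, (0 < j)%N -> q ^+ j != 1) ->
  Ks q n.+2 = q ^+ n.+2 * Fs q n.+1 - q ^+ n.+1 * Fs q n.
Proof.
move=> hq.
rewrite /Fs /Ks sum_recl (sum_recr (fun k => gK q n.+2 k.+1)) gKnn addr0 gK0.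
rewrite [X in _ = _ * X - _]sum_recl !fF0 mulrDr mulr1 -addrA; congr (_ + _).
rewrite !mulr_sumr -sumrB; apply: eq_bigr => [[k /= hk]] _.
rewrite /fF /gK.
have -> : (n.+2 - k.+1 = (n - k).+1)%N by lia.
rewrite subSS qbin_pascal2 // binS bin1.
have e1 : q ^+ n.+1 = q ^+ k * q ^+ (n - k).+1 by rewrite -exprD; congr (_ ^+ _); lia.
rewrite (exprS q n.+1) e1 !exprS exprD.
ring.
Qed.
Lemma Fs0 (F : fieldType) (q : F) : Fs q 0 = 1.
Proof. by rewrite /Fs sum_recl big_ord0 fF0 addr0. Qed.
Lemma Fs1 (F : fieldType) (q : F) : Fs q 1 = 1.
Proof. by rewrite /Fs sum_recl (sum_recr (fun k => fF q 1 k.+1)) big_ord0 fF0 fFnn ?addr0 ?add0r. Qed.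
Lemma Ks0 (F : fieldType) (q : F) : Ks q 0 = 1.
Proof. by rewrite /Ks sum_recl big_ord0 gK0 addr0 expr0. Qed.
Lemma Ks1 (F : fieldType) (q : F) : Ks q 1 = q.
Proof. by rewrite /Ks sum_recl (sum_recr (fun k => gK q 1 k.+1)) big_ord0 gK0 gKnn ?addr0 ?add0r expr1. Qed.

Lemma Fs_rec4 (F : fieldType) (q : F) n :
  (forall j, (0 < j)%N -> q ^+ j != 1) ->
  Fs q n.+4 = Fs q n.+3 - q ^+ n.+2 * Fs q n.+1 + q ^+ n.+1 * Fs q n.
Proof. move=> hq; rewrite (@Fs_rec _ q n.+2) (@Ks_rec _ q n hq); ring. Qed.

Lemma Fs_closed (F : fieldType) (q : F) m :
  (forall j, (0 < j)%N -> q ^+ j != 1) ->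
 [/\ Fs q (3 * m) = (-1)^+m * (q^+'C(m,2))^+3 * q^+m,
     Fs q (3 * m).+1 = (-1)^+m * (q^+'C(m,2))^+3 * q^+m * q^+m,
     Fs q (3 * m).+2 = 0 &
     Fs q (3 * m).+3 = (-1)^+m.+1 * (q^+'C(m.+1,2))^+3 * q^+m.+1].
Proof.
move=> hq; elim: m => [|m [h0 h1 h2 h3]].
  rewrite muln0 Fs0 Fs1 Fs_rec Fs1 Ks0 Fs_rec Fs_rec Fs1 Ks0 Ks1.
  rewrite !bin_small // !expr0 !expr1n; split; ring.
have e : (3 * m.+1 = (3 * m).+3)%N by lia.
rewrite e.
have h4 : Fs q (3 * m).+4 = (-1)^+m.+1 * (q^+'C(m.+1,2))^+3 * q^+m.+1 * q^+m.+1.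
  rewrite Fs_rec4 // h3 h1 h0 !binS !bin1 ?bin0 !exprD !exprS (mulnC 3 m) exprM; ring.
have h5 : Fs q (3 * m).+4.+1 = 0.
  rewrite Fs_rec4 // h4 h2 h1 !binS !bin1 ?bin0 !exprD !exprS (mulnC 3 m) exprM; ring.
split => //.
rewrite Fs_rec4 // h5 h3 h2 !binS !bin1 ?bin0 !exprD !exprS (mulnC 3 m) exprM; ring.
Qed.
Lemma sum_trunc (F : fieldType) (f : nat -> F) m N : (m <= N)%N ->
  (forall k, (m <= k)%N -> (k < N)%N -> f k = 0) ->
  \sum_(k < N) f k = \sum_(k < m) f k.
Proof.
move=> hmN hz.
rewrite -!(big_mkord xpredT f) (big_cat_nat (leq0n m) hmN) /=.
rewrite [X in _ + X = _]big1_seq ?addr0 // => k /andP [_].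
rewrite mem_index_iota => /andP [h1 h2]; exact: hz.
Qed.

Lemma lem_a (F : fieldType) (q : F) n :
  (forall j, (0 < j)%N -> q ^+ j != 1) ->
  (1 - q) * (lpoly n 1 2 (-1) q * qint q n.+1) = Fs q n - q * Ks q n.
Proof.
move=> hq.
have hq1 : q != 1 by rewrite -(expr1 q) hq.
have h1q : 1 - q != 0 by rewrite subr_eq0 eq_sym.
case: n => [|n].
  by rewrite /lpoly /= qint1 // Fs0 Ks0; ring.
set N := n.+1.
rewrite /lpoly /= mulr_suml mulr_sumr.
rewrite /Fs /Ks mulr_sumr -sumrB.
rewrite (@sum_trunc _ (fun k => fF q N k - q * gK q N k) N./2.+1 N.+1); last first.
- move=> k hk1 hk2.
  have hk : (N - k < k)%N.
    lia.
  by rewrite /fF /gK !qbin_gt // !mulr0 subr0.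
- lia.
apply: eq_bigr => [[k /= hk]] _.
have hk2 : (2 * k <= N)%N by lia.
rewrite expr1n mulr1.
have -> : (2 + N - k - 1 = (N - k).+1)%N by lia.
have -> : (2 + N - 1 = N.+1)%N by lia.
have -> : (N - 2 * k = N - k - k)%N by lia.
rewrite !qfactS /fF /gK.
have hkk : (k <= N - k)%N by lia.
have hb := qbin_fact q hkk.
have hnz : qfact q k * qfact q (N - k - k) != 0 by rewrite mulf_neq0 // qfact_neq0.
have -> : qbin q (N - k) k = qfact q (N - k) / (qfact q k * qfact q (N - k - k)).
  by rewrite -hb mulfK.
have hf1 := @qfact_neq0 _ q k hq.
have hf2 := @qfact_neq0 _ q (N - k - k) hq.
have hf3 := @qfact_neq0 _ q N hq.
have hf4 := @qfact_neq0 _ q (N - k) hq.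
have hi1 : 1 - q ^+ N.+1 != 0 by rewrite subr_eq0 eq_sym hq.
rewrite /qint (exprS q (N - k)).
have hf5 := @qfact_neq0 _ q n hq.
have hi2 : 1 - q ^+ n.+1 != 0 by rewrite subr_eq0 eq_sym hq.
field; by rewrite hf1 hf2 h1q hi1 hi2 hf5.
Qed.
Lemma main_gen (F : fieldType) (q : F) m :
  (forall j, (0 < j)%N -> q ^+ j != 1) ->
 [/\ lpoly (3 * m) 1 2 (-1) q * qint q (3 * m).+1
       = (-1) ^+ m * q ^+ ('C(m, 2) * 3 + m) * qint q m.+1,
     lpoly (3 * m).+1 1 2 (-1) q * qint q (3 * m).+2
       = (-1) ^+ m * q ^+ ('C(m, 2) * 3 + m * 2) * qint q m.+1 * (1 + q ^+ m.+1)
   & lpoly (3 * m).+2 1 2 (-1) q * qint q (3 * m).+3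
       = (-1) ^+ m * q ^+ ('C(m, 2) * 3 + m * 4 + 2) * qint q m.+1].
Proof.
move=> hq.
have hq1 : q != 1 by rewrite -(expr1 q) hq.
have h1q : 1 - q != 0 by rewrite subr_eq0 eq_sym.
have [h0 h1 h2 h3] := @Fs_closed _ q m hq.
split; apply: (mulfI h1q); rewrite lem_a // /qint.
- case: m h0 h1 h2 h3 => [|m] h0 h1 h2 h3.
    rewrite muln0 Fs0 Ks0 bin_small // !expr0; field; done.
  have [g0 g1 g2 g3] := @Fs_closed _ q m hq.
  have e : (3 * m.+1 = (3 * m).+1.+2)%N by lia.
  rewrite e (@Ks_rec _ q (3 * m).+1 hq).
  rewrite -e h0 e g2 g1.
  rewrite !binS !bin1 ?bin0 (mulnC 3 m) ?(exprS, exprD, exprM).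
  field; done.
- case: m h0 h1 h2 h3 => [|m] h0 h1 h2 h3.
    rewrite muln0 Fs1 Ks1 bin_small // !expr0; field; done.
  have [g0 g1 g2 g3] := @Fs_closed _ q m hq.
  have e : (3 * m.+1 = (3 * m).+3)%N by lia.
  rewrite h1 e (@Ks_rec _ q (3 * m).+2 hq) g3 g2.
  rewrite !binS !bin1 ?bin0 (mulnC 3 m) ?(exprS, exprD, exprM).
  field; done.
- rewrite h2 (@Ks_rec _ q (3 * m) hq) h1 h0.
  rewrite ?bin0 (mulnC 3 m) ?(exprS, exprD, exprM).
  field; done.
Qed.
Lemma qX_hyp : forall j, (0 < j)%N -> qX ^+ j != 1.
Proof.
move=> j hj; rewrite /qX -tofracXn -tofrac1 tofrac_eq.
apply/eqP => h; have := congr1 (fun p : {poly rat} => size p) h; rewrite size_polyXn size_poly1; lia.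
Qed.

Lemma binC2 n : ('C(n, 2) * 2 = n * (n - 1))%N.
Proof. elim: n => [|n IH] //; rewrite binS bin1 mulnDl IH; nia. Qed.

Theorem mainTheorem11 (n : nat) :
  [/\ lpoly (3 * n) 1 2 (-1) qX * qint qX (3 * n).+1
        = (-1) ^+ n * qX ^+ ((n * (3 * n - 1)) %/ 2) * qint qX n.+1,
      lpoly (3 * n).+1 1 2 (-1) qX * qint qX (3 * n).+2
        = (-1) ^+ n * qX ^+ ((n * (3 * n + 1)) %/ 2) * qint qX n.+1
          * (1 + qX ^+ n.+1)
    & lpoly (3 * n).+2 1 2 (-1) qX * qint qX (3 * n).+3
        = (-1) ^+ n * qX ^+ ((3 * n ^ 2 + 5 * n + 4) %/ 2) * qint qX n.+1].
Proof.
have [a b c] := @main_gen _ qX n qX_hyp.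
have hC := binC2 n.
have e1 : ((n * (3 * n - 1)) %/ 2 = 'C(n, 2) * 3 + n)%N.
  by rewrite (_ : (n * (3 * n - 1) = ('C(n, 2) * 3 + n) * 2)%N) ?mulnK //; nia.
have e2 : ((n * (3 * n + 1)) %/ 2 = 'C(n, 2) * 3 + n * 2)%N.
  by rewrite (_ : (n * (3 * n + 1) = ('C(n, 2) * 3 + n * 2) * 2)%N) ?mulnK //; nia.
have e3 : ((3 * n ^ 2 + 5 * n + 4) %/ 2 = 'C(n, 2) * 3 + n * 4 + 2)%N.
  by rewrite (_ : (3 * n ^ 2 + 5 * n + 4 = ('C(n, 2) * 3 + n * 4 + 2) * 2)%N) ?mulnK //; nia.
by rewrite e1 e2 e3.
Qed.
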